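(* Let $A$ be a finite abelian group and $H$ a subgroup of $A$. Then $\Gamma_{A,H}$ admits a total perfect code if and only if, up to isomorphism (of $A$ carrying $H$ to the indicated subgroup), one of the following holds: (1) $A=\mathbb{Z}_2^n\times Q$ and $|H|=2$, where $n\ge 1$ and $Q$ is an abelian group of odd order; (2) $A=\mathbb{Z}_2^n\times\mathbb{Z}_{2^{k_1}}\times\cdots\times\mathbb{Z}_{2^{k_t}}\times Q$ with $n\ge1$, $t\ge 1$, $k_j\ge 2$ for all $j$, $Q$ an abelian group of odd order, and $H=\{0,(x_1,\dots,x_n,z_1,\dots,z_t,0)\}$ where each $x_i\in\{0,1\}$, each $z_j\in\{0,2^{k_j-1}\}$, and $x_l=1$ for at least one $l\in\{1,\dots,n\}$; (3) $A=\mathbb{Z}_2^n\times\mathbb{Z}_3$ with $n\ge 0$ and $H=\{0\}^n\times\mathbb{Z}_3=\{(0,\dots,0,0),(0,\dots,0,1),(0,\dots,0,2)\}$.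
   Context: Abelian groups are written additively with identity $0$. For a subgroup $H$ of a finite abelian group $A$, the subgroup sum graph $\Gamma_{A,H}$ is the simple undirected graph with vertex set $A$ in which distinct vertices $x,y$ are adjacent if and only if $x+y\in H\setminus\{0\}$. A total perfect code in a graph is a set $C$ of vertices such that every vertex of the graph (whether in $C$ or not) has exactly one neighbour in $C$. (The paper prints $z_j\in\{0,2^{k_j-2}\}$ in (2), which is a misprint: $H$ must be a subgroup of order $2$, forcing $z_j\in\{0,2^{k_j-1}\}$.) *)

(* Defs.v *)
From mathcomp Require Import all_boot all_order all_algebra.
Set Implicit Arguments. Unset Strict Implicit. Unset Printing Implicit Defensive.
Import GRing.Theory.
Local Open Scope ring_scope.

Section SubgroupSumGraph.
Variable A : finZmodType.

Definition is_subgroup (H : {set A}) : bool :=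
  (0 \in H) && [forall x in H, forall y in H, x - y \in H].

Definition ssg_adj (H : {set A}) (x y : A) : bool :=
  [&& x != y, x + y \in H & x + y != 0].

Definition total_perfect_code (H C : {set A}) : Prop :=
  forall v : A, #|[set c in C | ssg_adj H v c]| = 1%N.

Definition has_total_perfect_code (H : {set A}) : Prop :=
  exists C : {set A}, total_perfect_code H C.

(* An explicit isomorphism  Z_{m_0} x ... x Z_{m_{r-1}} x Q  ~=  A,
   (c_0,...,c_{r-1},q) |-> \sum_i c_i g_i + q,
   where Q is a subgroup of A.  The map is a homomorphism because
   m_i g_i = 0, and a bijection because every x in A has a unique
   representation with 0 <= c_i < m_i and q in Q. *)
Definition coord_rep (ms : seq nat) (g : seq A) (Q : {set A})
    (x : A) (c : seq nat) (q : A) : bool :=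
  [&& size c == size ms, all2 (fun ci mi => ci < mi)%N c ms, q \in Q &
      x == \sum_(i < size ms) (nth 0 g i) *+ (nth 0%N c i) + q].

Definition decomp (ms : seq nat) (g : seq A) (Q : {set A}) : Prop :=
  [/\ size g = size ms, is_subgroup Q,
      (forall i, (i < size ms)%N -> (nth 0 g i) *+ (nth 0%N ms i) = 0) &
      forall x : A, exists! cq : seq nat * A, coord_rep ms g Q x cq.1 cq.2].

Definition case1 (H : {set A}) : Prop :=
  exists (n : nat) (g : seq A) (Q : {set A}),
    [/\ (1 <= n)%N, odd #|Q|, decomp (nseq n 2%N) g Q & #|H| = 2%N].

Definition case2 (H : {set A}) : Prop :=
  exists (n : nat) (ks : seq nat) (g : seq A) (Q : {set A})
         (xs zs : seq bool),
    [/\ (1 <= n)%N, (1 <= size ks)%N, all (fun k => 2 <= k)%N ks, odd #|Q| &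
        decomp (nseq n 2%N ++ [seq (2 ^ k)%N | k <- ks]) g Q] /\
    [/\ size xs = n, size zs = size ks, has id xs &
        H = [set 0; \sum_(i < n) (nth 0 g i) *+ nth false xs i
                   + \sum_(j < size ks)
                       (nth 0 g (n + j)) *+ (nth false zs j * 2 ^ (nth 0%N ks j).-1)%N]].

Definition case3 (H : {set A}) : Prop :=
  exists (n : nat) (g : seq A),
    decomp (rcons (nseq n 2%N) 3%N) g [set 0] /\
    H = [set 0; nth 0 g n; (nth 0 g n) *+ 2].

End SubgroupSumGraph.

(* Main.v *)
Require Import Defs.
From mathcomp Require Import all_boot all_order all_algebra all_fingroup all_solvable.
Set Implicit Arguments. Unset Strict Implicit. Unset Printing Implicit Defensive.
Import GRing.Theory FinRing.Theory.

Local Open Scope ring_scope.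

Section Char.
Variable A : finZmodType.
Variable H : {set A}.
Hypothesis sgH : is_subgroup H.

Lemma sg0 : 0 \in H. Proof. by case/andP: sgH. Qed.
Lemma sgB x y : x \in H -> y \in H -> x - y \in H.
Proof. by case/andP: sgH => _ /forall_inP P Hx Hy; move/forall_inP: (P x Hx); apply. Qed.
Lemma sgN x : x \in H -> - x \in H.
Proof. by move=> Hx; rewrite -sub0r sgB // sg0. Qed.
Lemma sgD x y : x \in H -> y \in H -> x + y \in H.
Proof. by move=> Hx Hy; rewrite -(opprK y) sgB // sgN. Qed.

Lemma card1_eq (S : {set A}) a b : #|S| = 1%N -> a \in S -> b \in S -> a = b.
Proof. by move/eqP/cards1P=> [c ->]; rewrite !inE => /eqP-> /eqP->. Qed.

Lemma card1_ex (S : {set A}) : #|S| = 1%N -> exists c, S = [set c].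
Proof. by move/eqP/cards1P. Qed.

Definition Nb (C : {set A}) v := [set c in C | ssg_adj H v c].

Lemma char_fwd C : total_perfect_code H C ->
  exists s, [/\ s != 0, H = [set 0; s; -s] &
   (s + s = 0 /\ forall a, a + a <> s) \/ (s + s <> 0 /\ forall x, x + x \in H)].
Proof.
move=> tpc.
have [s0 Ns0] := card1_ex (tpc 0).
have : s0 \in Nb C 0 by rewrite /Nb Ns0 set11.
rewrite inE /ssg_adj add0r => /and4P [Cs0 ns0 Hs0 s0n0].
have [t Nt] := card1_ex (tpc s0).
have : t \in Nb C s0 by rewrite /Nb Nt set11.
rewrite inE /ssg_adj => /and4P[Ct nts0 Hst st0].
have Ht : t \in H by rewrite -(addKr s0 t) addrC sgB.
have t0 : t = 0.
  apply/eqP; apply/negPn/negP => tn0.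
  have : t \in Nb C 0 by rewrite inE Ct /ssg_adj add0r Ht tn0 eq_sym tn0.
  by rewrite /Nb Ns0 inE => /eqP ts0; rewrite ts0 eqxx in nts0.
subst t.
have HE : H = [set 0; s0; -s0].
  apply/setP => v; apply/idP/idP; last first.
    by rewrite !inE => /orP[/orP[]|]/eqP->; [exact: sg0 | exact: Hs0 | exact: sgN].
  move=> Hv; rewrite !inE; apply/negPn/negP; rewrite !negb_or => /andP[/andP[v0 vs] vns].
  have a1 : 0 \in Nb C v by rewrite inE Ct /ssg_adj addr0 v0 Hv.
  have a2 : s0 \in Nb C v.
    by rewrite inE Cs0 /ssg_adj vs sgD //= addr_eq0 vns.
  by move: (card1_eq (tpc v) a1 a2) ns0 => ->; rewrite eqxx.
exists s0; split => //.
have Hnz h : h \in H -> h != 0 -> h = s0 \/ h = - s0.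
  by rewrite HE !inE => /orP[/orP[]|]/eqP->; rewrite ?eqxx // => _; [left|right].
case: (eqVneq (s0 + s0) 0) => ss.
  left; split => // a aas.
  have [c Nc] := card1_ex (tpc a).
  have : c \in Nb C a by rewrite /Nb Nc set11.
  rewrite inE /ssg_adj => /and4P[_ nac Hac ac0].
  have ns : - s0 = s0 by apply/eqP; rewrite eq_sym -addr_eq0 ss.
  have : a + c = a + a by rewrite aas; case: (Hnz _ Hac ac0) => // ->.
  by move/addrI => ca; rewrite ca eqxx in nac.
right; split; first by apply/eqP.
have hh h : h \in H -> h != 0 -> h + h != 0.
  move=> Hh h0; case: (Hnz _ Hh h0) => -> //.
  by rewrite -opprD oppr_eq0.
move=> x; apply/negPn/negP => xx.
have [c1 N1] := card1_ex (tpc (-x)).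
have : c1 \in Nb C (-x) by rewrite /Nb N1 set11.
rewrite inE /ssg_adj => /and4P[Cc1 nxc1 Hh1 h10].
set h1 := - x + c1 in Hh1 h10.
have c1E : c1 = x + h1 by rewrite /h1 addrA subrr add0r.
have [c2 N2] := card1_ex (tpc (-c1)).
have : c2 \in Nb C (-c1) by rewrite /Nb N2 set11.
rewrite inE /ssg_adj => /and4P[Cc2 nc1c2 Hc12 c120].
have c2x : c2 = x.
  case: (eqVneq (- x + c2) 0) => [/eqP|h20]; first by rewrite addrC subr_eq0 => /eqP.
  exfalso.
  have Hh2 : - x + c2 \in H.
    have -> : - x + c2 = (- x + c1) + (- c1 + c2) by rewrite addrA addrK.
    exact: sgD.
  have : c2 \in Nb C (-x).
    rewrite inE Cc2 /ssg_adj Hh2 h20 !andbT /=.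
    apply/eqP => xc2; apply: (negP xx); rewrite -[x + x]opprK opprD sgN //.
    by rewrite {2}xc2.
  rewrite /Nb N1 inE => /eqP c21.
  by rewrite c21 addNr eqxx in c120.
subst c2.
set y := x - h1.
have b1 : x \in Nb C (-y).
  rewrite inE Cc2 /ssg_adj /y opprB subrK Hh1 h10 !andbT.
  apply/eqP => e; apply: (negP xx).
  have -> : x + x = h1 by rewrite -{1}e subrK.
  done.
have b2 : c1 \in Nb C (-y).
  rewrite inE Cc1 /ssg_adj /y opprB c1E.
  have -> : h1 - x + (x + h1) = h1 + h1 by rewrite addrA subrK.
  rewrite sgD // hh // /= andbT.
  apply/eqP => e; apply: (negP xx).
  have e2 : (x + x) + h1 = h1 by rewrite addrAC -e subrK.
  have -> : x + x = 0 by rewrite -(addrK h1 (x + x)) e2 subrr.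
  exact: sg0.
have := card1_eq (tpc (-y)) b1 b2.
by move/eqP; rewrite c1E -subr_eq0 opprD addrA subrr add0r oppr_eq0 (negbTE h10).
Qed.


Lemma dbl (h v : A) : (h - v) + (h - v) = (h + h) - (v + v).
Proof. by rewrite addrACA opprD. Qed.

Lemma neq_sub (v h : A) : (v == h - v) = (v + v == h).
Proof. by rewrite eq_sym subr_eq eq_sym. Qed.

Lemma char_bwd s : s != 0 -> H = [set 0; s; -s] ->
  (s + s = 0 /\ forall a, a + a <> s) \/ (s + s <> 0 /\ forall x, x + x \in H) ->
  has_total_perfect_code H.
Proof.
move=> s0 HE [[ss nh]|[ss xx]].
  have ns : - s = s by apply/eqP; rewrite eq_sym -addr_eq0 ss.
  exists setT => v; apply/eqP/cards1P; exists (s - v); apply/setP => c.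
  rewrite !inE /ssg_adj HE !inE ns -orbA orbb.
  case: (eqVneq c (s - v)) => [->|ne].
    rewrite subrKC eqxx orbT s0 andbT /= neq_sub.
    by rewrite andbT; apply/eqP; apply: nh.
  have -> : (v + c == s) = false.
    apply/negbTE; apply: contra ne => /eqP e; apply/eqP.
    by rewrite -e (addrC v c) addrK.
  by rewrite orbF andbN andbF.
have sH : s + s \in H by apply: sgD; rewrite HE !inE eqxx ?orbT.
have ssE : s + s = - s.
  move: sH; rewrite HE !inE => /orP[/orP[]|] /eqP // e.
  have : s = 0 by rewrite -(addrK s s) e subrr.
  by move/eqP; rewrite (negbTE s0).
have nn : - s + - s = s by rewrite -opprD ssE opprK.
have sN0 : (- s == 0) = false by rewrite oppr_eq0 (negbTE s0).
have s00 : (s == 0) = false by rewrite (negbTE s0).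
have sNs : (s == - s) = false.
  by apply/negbTE/eqP => e; apply: ss; rewrite {2}e subrr.
have sNs' : (- s == s) = false by rewrite eq_sym.
have sN0' : (0 == - s) = false by rewrite eq_sym.
have s00' : (0 == s) = false by rewrite eq_sym.
exists [set x | (x + x == 0) || (x + x == s)] => v.
have : v + v \in H by [].
rewrite HE !inE => /orP[/orP[]|] /eqP vv; apply/eqP/cards1P;
  [exists (- s - v) | exists (- s - v) | exists (s - v)];
  apply/setP => c; (have [h ->] : exists h, c = h - v by exists (v + c); rewrite (addrC v c) addrK);
  rewrite !inE /ssg_adj subrKC neq_sub dbl vv (can_eq (subrK v)) !inE;
  (case: (eqVneq h 0) => [->|h0]; [ | case: (eqVneq h s) => [->|hs]; [ | case: (eqVneq h (-s)) => [->|hns]]]);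
  rewrite ?ss ?ssE ?nn ?subr0 ?subrr ?opprK ?addNr ?eqxx ?sN0 ?s00 ?sNs ?sNs' ?sN0' ?s00' /= ?andbF ?orbF //.
Qed.

End Char.

Local Open Scope ring_scope.

Lemma all2_nthP (r : rel nat) (c ms : seq nat) : size c = size ms ->
  all2 r c ms = [forall i : 'I_(size ms), r (nth 0%N c i) (nth 0%N ms i)].
Proof.
elim: c ms => [|a c IH] [|m ms] //=.
  by move=> _; apply/esym/forallP => -[].
move=> [] /IH e; rewrite e; apply/andP/forallP.
  move=> [ram /forallP P] i; case: i => -[|i] //= lti.
  by have := P (Ordinal (lti : (i < size ms)%N)).
move=> P; split; first by have := P ord0.
by apply/forallP => i; have := P (lift ord0 i).
Qed.

Section Dec.
Variable A : finZmodType.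

Definition rep (ms : seq nat) (g : seq A) (c : seq nat) (q : A) :=
  \sum_(i < size ms) nth 0 g i *+ nth 0%N c i + q.

Lemma mulrn_mod (x : A) m k : x *+ m = 0 -> x *+ k = x *+ (k %% m).
Proof. by move=> xm; rewrite {1}(divn_eq k m) mulrnDr mulnC mulrnA xm mul0rn add0r. Qed.

Variables (ms : seq nat) (g : seq A) (Q : {set A}).
Hypothesis dec : decomp ms g Q.

Lemma dec_ex x : exists c q, [/\ size c = size ms, all2 (fun ci mi => ci < mi)%N c ms,
   q \in Q & x = rep ms g c q].
Proof.
case: dec => _ _ _ /(_ x) [[c q] [/and4P [/eqP sc ac Qq /eqP xe] _]].
by exists c, q.
Qed.

Lemma dec_uniq c q c' q' :
  size c = size ms -> all2 (fun ci mi => ci < mi)%N c ms -> q \in Q ->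
  size c' = size ms -> all2 (fun ci mi => ci < mi)%N c' ms -> q' \in Q ->
  rep ms g c q = rep ms g c' q' -> c = c' /\ q = q'.
Proof.
move=> sc ac Qq sc' ac' Qq' e.
case: dec => _ _ _ /(_ (rep ms g c q)) [[c0 q0] [_ U]].
have e1 : (c0, q0) = (c, q) by apply: U; rewrite /coord_rep /= sc ac Qq !eqxx.
have e2 : (c0, q0) = (c', q') by apply: U; rewrite /coord_rep /= sc' ac' Qq' e !eqxx.
by rewrite e1 in e2; case: e2.
Qed.

End Dec.

Local Open Scope ring_scope.

Section Grp.
Variable A : finZmodType.

Lemma sg_group (Q : {set A}) : is_subgroup Q -> group_set Q.
Proof.
move=> sQ; apply/group_setP; split; first exact: (sg0 sQ).
by move=> x y Qx Qy; apply: (sgD sQ).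
Qed.

Lemma odd_no2 (Q : {set A}) (q : A) : is_subgroup Q -> odd #|Q| -> q \in Q ->
  q + q = 0 -> q = 0.
Proof.
move=> sQ oQ Qq qq.
pose G := Group (sg_group sQ).
have d1 : (#[q]%g %| #|G|)%N by apply: order_dvdG.
have d2 : (#[q]%g %| 2)%N by rewrite order_dvdn; apply/eqP; change (q *+ 2 = 0); rewrite mulr2n qq.
have o1 : odd #[q]%g by apply: dvdn_odd d1 oQ.
have : #[q]%g = 1%N.
  have := dvdn_leq (isT : (0 < 2)%N) d2; have := order_gt0 q.
  by case: #[q]%g o1 => [|[|[|]]].
by move/eqP; rewrite order_eq1 => /eqP.
Qed.

Lemma card2_sub (H : {set A}) : is_subgroup H -> #|H| = 2%N ->
  exists s, [/\ s != 0, s + s = 0 & H = [set 0; s; -s]].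
Proof.
move=> sH cH.
have : #|H :\ 0| = 1%N by move: cH; rewrite (cardsD1 0) (sg0 sH) add1n; case.
move/card1_ex => [s Es].
have : s \in H :\ 0 by rewrite Es set11.
rewrite !inE => /andP[s0 Hs].
have HE : H = [set 0; s].
  apply/setP => x; rewrite !inE; case: (eqVneq x 0) => [->|x0] /=; first exact: (sg0 sH).
  by move/setP: Es => /(_ x); rewrite !inE x0 /= => ->.
have ss : s + s = 0.
  have : s + s \in H by apply: (sgD sH).
  rewrite HE !inE => /orP[/eqP //|/eqP e].
  have : s = 0 by rewrite -(addrK s s) e subrr.
  by move/eqP; rewrite (negbTE s0).
have ns : - s = s by apply/eqP; rewrite eq_sym -addr_eq0 ss.
exists s; split => //; rewrite ns HE.
by apply/setP => x; rewrite !inE -orbA orbb.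
Qed.

End Grp.

Local Open Scope ring_scope.

Section Cases.
Variable A : finZmodType.

Lemma rep2 ms (g : seq A) c q :
  rep ms g c q *+ 2 = \sum_(i < size ms) nth 0 g i *+ (nth 0%N c i * 2) + q *+ 2.
Proof. by rewrite /rep mulrnDl -sumrMnl; congr (_ + _); apply: eq_bigr => i _; rewrite mulrnA. Qed.

Lemma mulrn_dvd (x : A) m k : x *+ m = 0 -> (m %| k)%N -> x *+ k = 0.
Proof. by move=> xm /dvdnP[j ->]; rewrite mulnC mulrnA xm mul0rn. Qed.

Lemma case1_cond (H : {set A}) : is_subgroup H -> case1 H ->
  exists s, [/\ s != 0, H = [set 0; s; -s] & (s + s = 0 /\ forall a, a + a <> s)].
Proof.
move=> sH [n [g [Q [n1 oQ dec cH]]]].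
have [s [s0 ss HE]] := card2_sub sH cH.
exists s; split => //; split => // a aas.
have [c [q [sc ac Qq ae]]] := dec_ex dec a.
have sQ : is_subgroup Q by case: dec.
have [_ _ gm0 _] := dec.
have aa : a + a = q + q.
  rewrite -mulr2n ae rep2 big1 ?add0r ?mulr2n // => i _.
  have lt : (i < n)%N by case: i => k /=; rewrite size_nseq.
  apply: (mulrn_dvd (m := 2%N)); last by rewrite dvdn_mull.
  by have := gm0 i (ltn_ord i); rewrite nth_nseq lt.
have Qs : s \in Q by rewrite -aas aa (sgD sQ).
by move: s0; rewrite (odd_no2 sQ oQ Qs ss) eqxx.
Qed.


Section DecH.
Variables (ms : seq nat) (g : seq A) (Q : {set A}).
Hypothesis dec : decomp ms g Q.
Hypothesis mpos : forall i, (i < size ms)%N -> (0 < nth 0%N ms i)%N.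

Lemma rep2m c q : rep ms g c q *+ 2 =
  rep ms g (mkseq (fun i => (nth 0%N c i * 2) %% nth 0%N ms i)%N (size ms)) (q *+ 2).
Proof.
have [_ _ gm0 _] := dec.
rewrite rep2 /rep; congr (_ + _); apply: eq_bigr => i _; rewrite nth_mkseq //.
by apply: mulrn_mod; apply: gm0.
Qed.

Lemma all2_mod f : all2 (fun ci mi => ci < mi)%N
   (mkseq (fun i => f i %% nth 0%N ms i)%N (size ms)) ms.
Proof.
rewrite all2_nthP ?size_mkseq //; apply/forallP => i.
by rewrite nth_mkseq // ltn_pmod // mpos.
Qed.

Lemma rep0 : 0 = rep ms g (nseq (size ms) 0%N) 0.
Proof. by rewrite /rep addr0 big1 // => i _; rewrite nth_nseq if_same mulr0n. Qed.

Lemma all2_0 : all2 (fun ci mi => ci < mi)%N (nseq (size ms) 0%N) ms.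
Proof.
rewrite all2_nthP ?size_nseq //; apply/forallP => i.
by rewrite nth_nseq if_same mpos.
Qed.

End DecH.

Lemma set2_of (H : {set A}) h : h != 0 -> h + h = 0 -> H = [set 0; h] ->
  exists s, [/\ s != 0, s + s = 0 & H = [set 0; s; -s]].
Proof.
move=> h0 hh HE; have ns : - h = h by apply/eqP; rewrite eq_sym -addr_eq0 hh.
by exists h; split => //; rewrite ns HE; apply/setP => x; rewrite !inE -orbA orbb.
Qed.

Lemma case2_cond (H : {set A}) : is_subgroup H -> case2 H ->
  exists s, [/\ s != 0, H = [set 0; s; -s] & (s + s = 0 /\ forall a, a + a <> s)].
Proof.
move=> sH [n [ks [g [Q [xs [zs [[n1 t1 kall oQ dec] [sx sz hx HE]]]]]]]].
set ms := (nseq n 2 ++ [seq 2 ^ k | k <- ks])%N in dec.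
set K := size ks.
have sms : size ms = (n + K)%N by rewrite size_cat size_nseq size_map.
have kge j : (j < K)%N -> (2 <= nth 0%N ks j)%N by move=> jK; apply: (all_nthP 0%N kall).
have nms i : (i < n + K)%N ->
    nth 0%N ms i = (if i < n then 2 else 2 ^ nth 0%N ks (i - n))%N.
  move=> iN; rewrite nth_cat size_nseq nth_nseq; case: ltnP => // ni.
  by rewrite (nth_map 0%N) // -(ltn_add2l n) subnKC.
have mpos i : (i < size ms)%N -> (0 < nth 0%N ms i)%N.
  by rewrite sms => /nms ->; case: ifP => _; rewrite ?expn_gt0.
set cs := mkseq (fun i => if (i < n)%N then nat_of_bool (nth false xs i)
           else (nth false zs (i - n) * 2 ^ (nth 0%N ks (i - n)).-1)%N) (n + K).
set h := (\sum_(i < n) _ + _) in HE.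
have hrep : h = rep ms g cs 0.
  rewrite /rep addr0 /h sms big_split_ord /=; congr (_ + _); apply: eq_bigr => i _.
    by rewrite /cs nth_mkseq ?ltn_ord ?(leq_trans (ltn_ord i) (leq_addr _ _)).
  rewrite /cs nth_mkseq ?ltn_add2l // ltnNge leq_addr /= addKn.
  by rewrite mulnC.
have scs : size cs = size ms by rewrite size_mkseq sms.
have acs : all2 (fun ci mi => ci < mi)%N cs ms.
  rewrite all2_nthP // sms; apply/forallP => i.
  rewrite nms // /cs nth_mkseq //; case: ifP => lin; first by case: (nth false xs i).
  have jK : (i - n < K)%N.
    by rewrite -(ltn_add2l n) subnKC // leqNgt lin.
  have k2 := kge _ jK.
  case: (nth false zs (i - n)); rewrite ?mul1n ?mul0n ?expn_gt0 //.
  by rewrite ltn_exp2l // prednK // (leq_trans _ k2).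
have [l ln xl] : exists2 l, (l < n)%N & nth false xs l.
  by move/(has_nthP false): hx; rewrite sx.
have csl : nth 0%N cs l = 1%N by rewrite /cs nth_mkseq ?ln ?xl // (leq_trans ln (leq_addr _ _)).
have lms : (l < size ms)%N by rewrite sms (leq_trans ln (leq_addr _ _)).
have hh : h + h = 0.
  rewrite -mulr2n hrep rep2 mul0rn addr0 big1 // => i _.
  have [_ _ gm0 _] := dec.
  apply: (mulrn_dvd (gm0 i (ltn_ord i))).
  have iN : (i < n + K)%N by rewrite -sms ltn_ord.
  rewrite nms //.
  rewrite /cs nth_mkseq -?sms //; case: ifP => lin; first by rewrite dvdn_mull.
  have jK : (i - n < K)%N.
    by rewrite -(ltn_add2l n) subnKC ?sms // leqNgt lin.
  have k2 := kge _ jK.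
  by rewrite -mulnA -expnSr prednK ?dvdn_mull // (leq_trans _ k2).
have sQ : is_subgroup Q by case: dec.
have h0 : h != 0.
  apply/eqP => h0; have e0 := rep0 ms g.
  have := dec_uniq dec scs acs (sg0 sQ) (size_nseq _ _) (all2_0 mpos) (sg0 sQ).
  rewrite -hrep h0 -e0 => /(_ erefl) [e _].
  by move: csl; rewrite e nth_nseq lms.
have [s [s0 ss HE']] := set2_of h0 hh HE.
have hs : h = s.
  move/setP/(_ h): HE'; rewrite HE !inE eqxx orbT (negbTE h0) /= => /esym /orP[] /eqP // e.
  by rewrite e; apply/eqP; rewrite eq_sym -addr_eq0 ss.
subst s.
exists h; split => //; split => // a aah.
have [c [q [sc ac Qq ae]]] := dec_ex dec a.
have : rep ms g cs 0 = rep ms g (mkseq (fun i => (nth 0%N c i * 2) %% nth 0%N ms i)%N (size ms)) (q *+ 2).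
  by rewrite -hrep -aah -mulr2n ae (rep2m dec).
move/(dec_uniq dec scs acs (sg0 sQ) (size_mkseq _ _) (all2_mod mpos _)) => [].
  by rewrite mulr2n sgD.
move=> e _; move: csl; rewrite e nth_mkseq // nms -?sms // ln.
by rewrite modnMl.
Qed.

Lemma case3_cond (H : {set A}) : is_subgroup H -> case3 H ->
  exists s, [/\ s != 0, H = [set 0; s; -s] & (s + s <> 0 /\ forall x, x + x \in H)].
Proof.
move=> sH [n [g [dec HE]]].
set ms := rcons (nseq n 2) 3 in dec.
set s := nth 0 g n in HE.
have sms : size ms = n.+1 by rewrite size_rcons size_nseq.
have nms i : (i < n.+1)%N -> nth 0%N ms i = (if i < n then 2 else 3)%N.
  move=> iN; rewrite nth_rcons size_nseq nth_nseq; case: ltnP => // ni.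
  by have -> : i == n by rewrite eqn_leq ni -ltnS iN.
have mpos i : (i < size ms)%N -> (0 < nth 0%N ms i)%N.
  by rewrite sms => /nms ->; case: ifP.
have [_ sQ gm0 _] := dec.
have s3 : s *+ 3 = 0 by have := gm0 n; rewrite nms ?ltnn // sms => ->.
have ns : - s = s *+ 2.
  by apply/esym/eqP; rewrite -addr_eq0 -mulrSr s3.
set c1 := rcons (nseq n 0%N) 1%N.
have sc1 : size c1 = size ms by rewrite size_rcons size_nseq sms.
have nc1 i : nth 0%N c1 i = (i == n).
  rewrite nth_rcons size_nseq nth_nseq; case: ltnP => ni; first by rewrite ltn_eqF.
  by case: eqP.
have ac1 : all2 (fun ci mi => ci < mi)%N c1 ms.
  rewrite all2_nthP // sms; apply/forallP => i.
  by rewrite nms // nc1; case: (_ == _); case: ifP.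
have srep : s = rep ms g c1 0.
  rewrite /rep addr0 sms big_ord_recr /= big1 ?add0r ?nc1 ?eqxx //.
  by move=> i _; rewrite nc1 /= ltn_eqF ?mulr0n.
have s0 : s != 0.
  apply/eqP => s0; have e0 := rep0 ms g.
  have := dec_uniq dec sc1 ac1 (sg0 sQ) (size_nseq _ _) (all2_0 mpos) (sg0 sQ).
  rewrite -srep s0 -e0 => /(_ erefl) [e _].
  by move: (nc1 n); rewrite e nth_nseq sms ltnSn eqxx.
exists s; split => //; first by rewrite ns.
split.
  move=> ss; move/eqP: s0; apply.
  by rewrite -s3 mulrSr mulr2n ss add0r.
move=> x; have [c [q [sc ac Qq ae]]] := dec_ex dec x.
move: Qq; rewrite inE => /eqP q0.
rewrite -mulr2n ae (rep2m dec) q0 mul0rn /rep addr0 sms big_ord_recr /= big1 ?add0r.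
  rewrite nth_mkseq ?sms // nms // ltnn.
  have : ((nth 0%N c n * 2) %% 3 < 3)%N by rewrite ltn_pmod.
  rewrite HE; case: ((nth 0%N c n * 2) %% 3)%N => [|[|[|]]] //= _; rewrite !inE.
  - by rewrite mulr0n eqxx.
  - by rewrite mulr1n eqxx orbT.
  - by rewrite eqxx orbT.
move=> i _; rewrite nth_mkseq ?sms ?(leq_trans (ltn_ord i)) // nms ?(leq_trans (ltn_ord i)) //.
by rewrite modnMl mulr0n.
Qed.

End Cases.

Local Open Scope ring_scope.

Section Transfer.
Variable A : finZmodType.

Definition vrep (b : seq A) (c : seq nat) (q : A) (Q : {set A}) :=
  [/\ size c = size b, all2 (fun ci mi => ci < mi)%N c (map order b) & q \in Q].

Lemma transfer_gen (Q : {group A}) (b : seq A) (G : {group A}) :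
  ((\big[dprod/1]_(x <- b) <[x]>) \x Q = G)%g ->
  [/\ forall y, y \in G -> exists c q, vrep b c q Q /\ y = rep (map order b) b c q,
      forall c q, vrep b c q Q -> rep (map order b) b c q \in G &
      forall c q c' q', vrep b c q Q -> vrep b c' q' Q ->
        rep (map order b) b c q = rep (map order b) b c' q' -> c = c' /\ q = q'].
Proof.
elim: b G => [|x b IH] G.
  rewrite big_nil dprod1g => <-; split.
  - by move=> y Qy; exists [::], y; split; rewrite /rep ?big_ord0 ?add0r.
  - by move=> c q [_ _ Qq]; rewrite /rep big_ord0 add0r.
  - move=> c q c' q' [/size0nil -> _ _] [/size0nil -> _ _].
    by rewrite /rep !big_ord0 !add0r.
rewrite big_cons -dprodA => defG.
have := dprodP defG; case=> -[K G' eK eG'] mulG _ tiG.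
have [IE IM IU] := IH _ eG'.
rewrite eG' in mulG tiG.
have repS c0 c q : rep (map order (x :: b)) (x :: b) (c0 :: c) q
    = x *+ c0 + rep (map order b) b c q.
  by rewrite /rep /= big_ord_recl /= addrA.
split.
- move=> y; rewrite -mulG => /mulsgP[u z /cycleP[k ->] Gz ->].
  have [c [q [vr ze]]] := IE z Gz.
  exists ((k %% #[x]%g)%N :: c), q; case: vr => sc ac Qq.
  split; first by split; rewrite /= ?sc ?ac ?ltn_pmod ?order_gt0.
  by rewrite repS -ze -zmodXgE expg_mod_order.
- move=> [|c0 c] q [//= /eqP]; rewrite eqSS => /eqP sc /andP[lc ac] Qq.
  rewrite repS -mulG; apply: mem_mulg; first by rewrite -zmodXgE mem_cycle.
  exact: IM.
- move=> c q c' q' [sc ac Qq] [sc' ac' Qq'].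
  case: c sc ac => [|c0 c] /eqP //=; rewrite eqSS => /eqP sc /andP[lc ac].
  case: c' sc' ac' => [|d0 d] /eqP //=; rewrite eqSS => /eqP sd /andP[ld ad].
  rewrite !repS => e.
  pose r := rep (map order b) b c q; pose r' := rep (map order b) b d q'.
  have Gr : r \in G' by apply: IM (And3 sc ac Qq).
  have Gr' : r' \in G' by apply: IM (And3 sd ad Qq').
  have : x *+ c0 - x *+ d0 \in K :&: G'.
    rewrite inE; apply/andP; split.
      by rewrite -eK -!zmodXgE -zmodVgE -zmodMgE groupM ?groupV ?mem_cycle.
    have -> : x *+ c0 - x *+ d0 = (x *+ c0 + r) - (x *+ d0 + r).
      by rewrite opprD addrACA subrr addr0.
    rewrite e opprD addrACA subrr add0r.
    by rewrite -zmodVgE -zmodMgE groupM ?groupV.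
  rewrite -eK tiG inE => /eqP ex.
  have e0 : (x ^+ c0)%g = (x ^+ d0)%g.
    by apply/eqP; rewrite !zmodXgE -subr_eq0; apply/eqP; exact: ex.
  have cd : c0 = d0.
    by move/eqP: e0; rewrite eq_expg_mod_order !modn_small // => /eqP.
  subst d0; move: e; rewrite -zmodXgE => /addrI e.
  by have [-> ->] := IU c q d q' (And3 sc ac Qq) (And3 sd ad Qq') e.
Qed.


Lemma group_is_subgroup (Q : {group A}) : is_subgroup Q.
Proof.
apply/andP; split; first exact: (group1 Q).
apply/forall_inP => x Qx; apply/forall_inP => y Qy.
by rewrite -zmodVgE -zmodMgE groupM ?groupV.
Qed.

Lemma decomp_of (b : seq A) (Q : {group A}) :
  ((\big[dprod/1]_(x <- b) <[x]>) \x Q = [set: A])%g -> decomp (map order b) b Q.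
Proof.
move=> defG; have [E _ U] := transfer_gen (G := [set: A]%G) defG.
split; rewrite ?size_map //; first exact: group_is_subgroup.
  move=> i ib; rewrite (nth_map 0) //.
  by rewrite -zmodXgE expg_order.
move=> x; have [c [q [[sc ac Qq] xe]]] := E x (in_setT x).
exists (c, q); split.
  by rewrite /coord_rep /= size_map sc ac Qq xe /rep size_map !eqxx.
move=> [c' q'] /and4P [/eqP sc' ac' Qq' /eqP xe'].
rewrite size_map in sc'.
have e : rep (map order b) b c q = rep (map order b) b c' q' by rewrite -xe xe'.
by have [-> ->] := U c q c' q' (And3 sc ac Qq) (And3 sc' ac' Qq') e.
Qed.

End Transfer.

Local Open Scope ring_scope.

Section F3.
Variable A : finZmodType.

Lemma gE : group_set [set x : A | x + x == 0].
Proof.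
apply/group_setP; split; first by rewrite inE addr0.
move=> x y; rewrite !inE => /eqP xx /eqP yy; rewrite zmodMgE.
by rewrite addrACA xx yy addr0.
Qed.

Lemma zcent (X Y : {set A}) : X \subset 'C(Y)%g.
Proof. by apply/centsP => x _ y _; apply: zmod_mulgC. Qed.

Lemma f3 (H : {set A}) s : is_subgroup H -> s != 0 -> H = [set 0; s; -s] -> s + s <> 0 ->
  (forall x, x + x \in H) -> case3 H.
Proof.
move=> sH s0 HE ss xx.
have ss3 : s + s = - s.
  move: (xx s); rewrite HE !inE => /orP[/orP[]|] /eqP // e.
  have : s = 0 by rewrite -(addrK s s) e subrr.
  by move/eqP; rewrite (negbTE s0).
have s3 : s *+ 3 = 0 by rewrite mulrSr mulr2n ss3 addNr.
have os : #[s]%g = 3%N.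
  have d3 : (#[s]%g %| 3)%N by rewrite order_dvdn zmodXgE s3.
  have n1 : #[s]%g != 1%N by rewrite order_eq1.
  have := dvdn_leq (isT : (0 < 3)%N) d3; have := order_gt0 s.
  by move: d3 n1; case: #[s]%g => [|[|[|[|]]]].
pose EG := Group (@gE).
have ab : (2.-abelem EG)%g.
  apply: exponent2_abelem; apply/exponentP => x; rewrite inE => /eqP x2.
  by rewrite zmodXgE mulr2n x2.
have [b defE ob] := abelian_structure (abelem_abelian ab).
rewrite (abelian_type_abelem ab) in ob.
have ob' : map order b = nseq (size b) 2%N.
  by rewrite ob; congr nseq; rewrite -(size_map order b) ob size_nseq.
have ti : EG :&: <[s]>%g = 1%g.
  apply/trivgP/subsetP => y; rewrite inE => /andP[Ey Cy]; rewrite inE.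
  have d2 : (#[y]%g %| 2)%N.
    by move: Ey; rewrite inE => /eqP y2; rewrite order_dvdn zmodXgE mulr2n y2.
  have d3 : (#[y]%g %| 3)%N by rewrite -os (orderE s); apply: order_dvdG.
  have : (#[y]%g %| gcdn 2 3)%N by rewrite dvdn_gcd d2 d3.
  by rewrite dvdn1 order_eq1.
have mulT : (EG * <[s]>)%g = [set: A].
  apply/setP => x; rewrite in_setT.
  have := xx x; rewrite HE !inE => /orP[/orP[]|] /eqP e.
  - rewrite -[x]mulg1; apply: mem_mulg; first by rewrite inE e.
    exact: group1.
  - have -> : x = ((x + s) * (s ^+ 2))%g.
      by rewrite zmodMgE zmodXgE -addrA -mulrS s3 addr0.
    apply: mem_mulg; last exact: mem_cycle.
    by rewrite inE addrACA e ss3 subrr.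
  - have -> : x = ((x - s) * s)%g by rewrite zmodMgE subrK.
    apply: mem_mulg; last exact: cycle_id.
    by rewrite inE addrACA e -opprD ss3 opprK addNr.
have dEs : (EG \x <[s]> = [set: A])%g by rewrite dprodE ?zcent.
have defG : ((\big[dprod/1]_(x <- rcons b s) <[x]>) \x 1 = [set: A])%g.
  by rewrite dprodg1 big_rcons /= defE.
have := decomp_of defG; rewrite map_rcons ob' os => dec.
exists (size b), (rcons b s); split => //.
by rewrite nth_rcons ltnn eqxx HE; congr [set _; _; _]; rewrite -ss3 mulr2n.
Qed.

End F3.

Local Open Scope ring_scope.

Section F2core.
Variable A : finZmodType.

Lemma f2core (H : {set A}) s n ks (g : seq A) (Q : {set A}) :
  s != 0 -> s + s = 0 -> (forall a, a + a <> s) -> H = [set 0; s; -s] ->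
  odd #|Q| -> all (fun k => 2 <= k)%N ks ->
  decomp (nseq n 2 ++ [seq 2 ^ k | k <- ks])%N g Q -> case1 H \/ case2 H.
Proof.
move=> s0 ss nh HE oQ kall dec.
set ms := (nseq n 2 ++ [seq 2 ^ k | k <- ks])%N in dec.
set K := size ks.
have sms : size ms = (n + K)%N by rewrite size_cat size_nseq size_map.
have kge j : (j < K)%N -> (2 <= nth 0%N ks j)%N by move=> jK; apply: (all_nthP 0%N kall).
have nms i : (i < n + K)%N ->
    nth 0%N ms i = (if i < n then 2 else 2 ^ nth 0%N ks (i - n))%N.
  move=> iN; rewrite nth_cat size_nseq nth_nseq; case: ltnP => // ni.
  by rewrite (nth_map 0%N) // -(ltn_add2l n) subnKC.
have mpos i : (i < size ms)%N -> (0 < nth 0%N ms i)%N.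
  by rewrite sms => /nms ->; case: ifP => _; rewrite ?expn_gt0.
have sQ : is_subgroup Q by case: dec.
have [c [q [sc ac Qq se]]] := dec_ex dec s.
have : rep ms g (mkseq (fun i => (nth 0%N c i * 2) %% nth 0%N ms i)%N (size ms)) (q *+ 2)
     = rep ms g (nseq (size ms) 0%N) 0.
  by rewrite -(rep2m dec) -se -(rep0 ms g) mulr2n ss.
have Qq2 : q *+ 2 \in Q by rewrite mulr2n (sgD sQ).
case/(dec_uniq dec (size_mkseq _ _) (all2_mod mpos _) Qq2 (size_nseq _ _) (all2_0 mpos) (sg0 sQ)) => ec eq.
have q0 : q = 0 by apply: (odd_no2 sQ oQ Qq); rewrite -mulr2n.
rewrite q0 in se.
have cmod i : (i < n + K)%N -> ((nth 0%N c i * 2) %% nth 0%N ms i = 0)%N.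
  move=> iN; have := congr1 (fun t => nth 0%N t i) ec.
  by rewrite /= nth_mkseq ?sms // nth_nseq if_same.
have clt i : (i < n + K)%N -> (nth 0%N c i < nth 0%N ms i)%N.
  move=> iN; move: ac; rewrite all2_nthP // sms => /forallP /(_ (Ordinal iN)).
  done.
set xs := mkseq (fun i => nth 0%N c i == 1%N) n.
set zs := mkseq (fun j => nth 0%N c (n + j) != 0%N) K.
have cx i : (i < n)%N -> nth 0%N c i = nth false xs i.
  move=> iN; have iNK : (i < n + K)%N by apply: leq_trans iN (leq_addr _ _).
  have := clt i iNK; rewrite nms // iN /xs nth_mkseq //.
  by case: (nth 0%N c i) => [|[|]].
have cz j : (j < K)%N -> nth 0%N c (n + j) = (nth false zs j * 2 ^ (nth 0%N ks j).-1)%N.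
  move=> jK; have jNK : (n + j < n + K)%N by rewrite ltn_add2l.
  have := clt _ jNK; have := cmod _ jNK.
  rewrite nms // ltnNge leq_addr /= addKn /zs nth_mkseq //.
  have := kge j jK; case: (nth 0%N ks j) => [|k] // _ /=.
  rewrite expnSr => /eqP; rewrite -/(dvdn _ _) dvdn_pmul2r // => /dvdnP [t ->].
  rewrite mulnC ltn_pmul2l ?expn_gt0 //.
  case: t => [|[|]] //= _; rewrite ?muln0 ?muln1 ?mul1n ?mul0n //.
  by rewrite expn_eq0 /= mul1n.
have hs : s = \sum_(i < n) nth 0 g i *+ nth false xs i
    + \sum_(j < K) nth 0 g (n + j) *+ (nth false zs j * 2 ^ (nth 0%N ks j).-1)%N.
  rewrite se /rep addr0 sms big_split_ord /=; congr (_ + _); apply: eq_bigr => i _.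
    by rewrite cx.
  by rewrite cz.
have hasx : has id xs.
  apply/negPn/negP => nhx.
  have cx0 i : (i < n)%N -> nth 0%N c i = 0%N.
    move=> iN; rewrite cx //; suff -> : nth false xs i = false by []; apply/negbTE; apply: contra nhx => xi.
    by apply/(has_nthP false); exists i; rewrite ?size_mkseq.
  have ceven i : (i < n + K)%N -> (2 %| nth 0%N c i)%N.
    move=> iN; case: (ltnP i n) => lin; first by rewrite cx0.
    have -> : i = (n + (i - n))%N by rewrite subnKC.
    have jK : (i - n < K)%N by rewrite -(ltn_add2l n) subnKC.
    rewrite cz //; apply: dvdn_mull.
    by have := kge _ jK; case: (nth 0%N ks (i - n)) => [|[|k]] //= _; rewrite expnS dvdn_mulr.
  apply: (nh (rep ms g (mkseq (fun i => nth 0%N c i %/ 2)%N (size ms)) 0)).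
  rewrite -mulr2n rep2 mul0rn se /rep; congr (_ + _); apply: eq_bigr => i _.
  by rewrite nth_mkseq // divnK // ceven // -sms.
have n1 : (1 <= n)%N by move: hasx; rewrite /xs; case: (n) => [|n'].
have ns : - s = s by apply/eqP; rewrite eq_sym -addr_eq0 ss.
have HE2 : H = [set 0; s] by rewrite HE ns; apply/setP => x; rewrite !inE -orbA orbb.
case: (eqVneq ks [::]) => [ks0|ksn].
  left; exists n, g, Q; split => //.
    by move: dec; rewrite /ms ks0 /= cats0.
  by rewrite HE2 cards2 eq_sym s0.
right; exists n, ks, g, Q, xs, zs; split.
  by split => //; case: (ks) ksn.
by split => //; rewrite ?size_mkseq // HE2 -hs.
Qed.


Lemma bigdprod_mem (b : seq A) (G : {group A}) :
  (\big[dprod/1]_(x <- b) <[x]> = G)%g -> forall x, x \in b -> x \in G.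
Proof.
elim: b G => [|x0 b IH] G //.
rewrite big_cons => defG; have [[K G' eK eG'] mulG _ _] := dprodP defG.
move=> x; rewrite inE -mulG => /orP[/eqP ->|xb].
  by rewrite -[X in X \in _]mulg1; apply: mem_mulg; [exact: cycle_id | rewrite eG' group1].
by rewrite -[X in X \in _]mul1g; apply: mem_mulg; [exact: group1 | rewrite eG'; exact: IH].
Qed.

Lemma map_const_nseq (T U : eqType) (f : T -> U) (s : seq T) u :
  (forall x, x \in s -> f x = u) -> map f s = nseq (size s) u.
Proof.
elim: s => //= x s IH fu; rewrite fu ?mem_head // IH // => y ys.
by apply: fu; rewrite inE ys orbT.
Qed.

Lemma f2 (H : {set A}) s : s != 0 -> H = [set 0; s; -s] -> s + s = 0 ->
  (forall a, a + a <> s) -> case1 H \/ case2 H.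
Proof.
move=> s0 HE ss nh.
pose G := [set: A]%G.
have cG : abelian G by apply: zcent.
have dPQ := nilpotent_pcoreC 2%N (abelian_nil cG).
have oQ : odd #|'O_(2%N)^'(G)|%g.
  by have := pcore_pgroup (2%N)^' G; rewrite /pgroup p'natE // dvdn2 negbK.
have cP : abelian 'O_(2%N)(G)%g by apply: zcent.
have [b defP ob] := abelian_structure cP.
have bP := bigdprod_mem defP.
have gt1 x : x \in b -> (1 < #[x]%g)%N.
  move=> xb; have := abelian_type_gt1 'O_(2%N)(G)%g; rewrite -ob all_map => /allP.
  by apply.
have o2 x : x \in b -> #[x]%g = (2 ^ logn 2 #[x]%g)%N.
  move=> xb; have pe := mem_p_elt (pcore_pgroup 2%N G) (bP x xb).
  by rewrite -p_part part_pnat_id.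
set b1 := [seq x <- b | #[x]%g == 2%N].
set b2 := [seq x <- b | predC (fun x => #[x]%g == 2%N) x].
have pe : perm_eq (b1 ++ b2) b by rewrite perm_filterC.
have defG : ((\big[dprod/1]_(x <- b1 ++ b2) <[x]>) \x 'O_(2%N)^'(G) = [set: A])%g.
  by rewrite (perm_big _ pe) defP; exact: dPQ.
have dec := decomp_of defG.
set ks := [seq logn 2 #[x]%g | x <- b2].
have ems : map order (b1 ++ b2) = (nseq (size b1) 2 ++ [seq 2 ^ k | k <- ks])%N.
  rewrite map_cat; congr (_ ++ _).
    by apply: map_const_nseq => x; rewrite mem_filter => /andP[/eqP].
  rewrite /ks -map_comp; apply/eq_in_map => x; rewrite mem_filter => /andP[_ xb].
  exact: o2.
rewrite ems in dec.
apply: (f2core s0 ss nh HE oQ _ dec).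
apply/allP => k /mapP [x]; rewrite mem_filter /= => /andP[x2 xb] ->.
move: (logn 2 #[x]%g) (o2 x xb) (gt1 x xb) x2 => k' ->.
by case: k' => [|[|]].
Qed.

End F2core.

Theorem theorem5p4 (A : finZmodType) (H : {set A}) :
  is_subgroup H ->
  (has_total_perfect_code H <-> case1 H \/ case2 H \/ case3 H).
Proof.
move=> sH; split.
  move=> [C tpc]; have [s [s0 HE [[ss nh]|[ss xx]]]] := char_fwd sH tpc.
    by case: (f2 s0 HE ss nh) => [c1|c2]; [left | right; left].
  by right; right; exact: (f3 sH s0 HE ss xx).
case=> [c1|[c2|c3]].
- have [s [s0 HE cnd]] := case1_cond sH c1; exact: (char_bwd sH s0 HE (or_introl cnd)).
- have [s [s0 HE cnd]] := case2_cond sH c2; exact: (char_bwd sH s0 HE (or_introl cnd)).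
- have [s [s0 HE cnd]] := case3_cond sH c3; exact: (char_bwd sH s0 HE (or_intror cnd)).
Qed.
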